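(* Let $k$ be a field of characteristic $2$ and $n$ a positive even integer. Then the symmetric bilinear form $\phi^{\mathrm{odd}}_n$ is identically zero, and the nondegenerate part of the symmetric bilinear form $\phi^{\mathrm{even}}_n$ is isomorphic to the orthogonal sum of $2^{s(n)-1}$ copies of $\langle 1 \rangle$.
   Context: $\langle \alpha_1,\dots,\alpha_m\rangle$ denotes the symmetric bilinear form $(x,y)\mapsto x^tAy$ on $k^m$ with $A$ diagonal with entries $\alpha_i$. Define $\phi^{\mathrm{odd}}_n := \bigoplus_{0 \le i < n/2,\ i \text{ odd}} \langle \binom{n}{i}\rangle$ and $\phi^{\mathrm{even}}_n := \bigoplus_{0 \le i < n/2,\ i \text{ even}} \langle \binom{n}{i}\rangle$, binomial coefficients viewed in $k$. The nondegenerate part of a symmetric bilinear form on $V$ is the induced nondegenerate form on $V$ modulo its radical. $s(n)$ is the number of 1's in the binary expansion of $n$. *)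

(* Defs.v *)
From HB Require Import structures.
From mathcomp Require Import all_boot all_order all_algebra.
Set Implicit Arguments. Unset Strict Implicit. Unset Printing Implicit Defensive.
Import Order.TTheory GRing.Theory Num.Theory.
Local Open Scope ring_scope.

Section Forms.
Variable k : fieldType.

Definition bform m (A : 'M[k]_m) (x y : 'rV[k]_m) : k := (x *m A *m y^T) 0 0.

Definition diag_form (s : seq k) : 'M[k]_(size s) := diag_mx (\row_(i < size s) s`_i).

Definition in_radical m (A : 'M[k]_m) (x : 'rV[k]_m) : Prop :=
  forall y, bform A x y = 0.

(* The nondegenerate part V/rad(A) of (k^m, A) is isometric to (k^r, B):
   there is a surjective linear map f : k^m -> k^r whose kernel is exactly
   the radical of A and which carries A to B; equivalently the induced map
   V/rad -> k^r is an isometric isomorphism. *)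
Definition nondeg_part_isometric m r (A : 'M[k]_m) (B : 'M[k]_r) : Prop :=
  exists f : 'M[k]_(m, r),
    [/\ row_full f,
        (forall x, x *m f = 0 <-> in_radical A x) &
        (forall x y, bform A x y = bform B (x *m f) (y *m f))].

(* phi^odd_n and phi^even_n : entries binom(n,i) for 0 <= i < n/2 (i.e. 2i < n)
   with i odd, resp. even. *)
Definition phi_odd_entries (n : nat) : seq k :=
  [seq ('C(n, i))%:R | i <- iota 0 n & odd i && (i.*2 < n)%N].
Definition phi_even_entries (n : nat) : seq k :=
  [seq ('C(n, i))%:R | i <- iota 0 n & ~~ odd i && (i.*2 < n)%N].

Definition phi_odd (n : nat) := diag_form (phi_odd_entries n).
Definition phi_even (n : nat) := diag_form (phi_even_entries n).

End Forms.

(* s(n): number of 1's in the binary expansion of n (bit i is odd (n / 2^i);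
   bits i >= n vanish since n < 2^n). *)
Definition s2 (n : nat) : nat := \sum_(i < n) odd (n %/ 2 ^ i).

(* Main.v *)
Require Import Defs.
From HB Require Import structures.
From mathcomp Require Import all_boot all_order all_algebra zify.
Import Order.TTheory GRing.Theory Num.Theory.


Lemma count_double (P : pred nat) a :
  count P (iota 0 a.*2) = count (fun t => P t.*2) (iota 0 a) + count (fun t => P t.*2.+1) (iota 0 a).
Proof.
elim: a => [|a IH] //.
rewrite doubleS -addn2 -(addn1 a) !iotaD !count_cat IH /= !add0n !addn0.
rewrite -!addnA; congr (_ + _); rewrite addnCA; congr (_ + _).
Qed.

Lemma count_ext (P : pred nat) M N : M <= N -> (forall i, M <= i -> ~~ P i) ->
  count P (iota 0 N) = count P (iota 0 M).
Proof.
move=> le H; rewrite -(subnKC le) iotaD count_cat add0n.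
rewrite [X in _ + X](_ : _ = 0) ?addn0 //.
rewrite -(count_pred0 (iota M (N - M))); apply: eq_in_count => i.
rewrite mem_iota => /andP[h _]; exact/negbTE/H.
Qed.

Lemma odd_bin2 n i : odd 'C(n.+2, i.+2) = odd 'C(n, i.+2) (+) odd 'C(n, i).
Proof.
rewrite !binS !oddD.
by case: (odd 'C(n,i)); case: (odd 'C(n,i.+1)); case: (odd 'C(n,i.+2)).
Qed.

Lemma B12 m j : odd 'C(m.*2, j.*2) = odd 'C(m, j) /\ ~~ odd 'C(m.*2, j.*2.+1).
Proof.
elim: m j => [|m IH] j.
  by case: j => [|j] //=; rewrite !bin0n.
rewrite doubleS; case: j => [|j].
  by rewrite /= double0 bin1 /= odd_double.
have [h1 h2] := IH j.+1; have [h3 h4] := IH j.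
rewrite doubleS in h1 h2.
rewrite doubleS odd_bin2 h1 h3 binS oddD; split => //.
by rewrite odd_bin2 (negbTE h2) (negbTE h4).
Qed.

Lemma B3 m j : odd 'C(m.*2.+1, j.*2) = odd 'C(m, j).
Proof.
case: j => [|j]; first by rewrite !bin0.
have [h1 _] := B12 m j.+1; rewrite doubleS in h1.
by rewrite doubleS binS oddD h1 (negbTE (B12 m j).2) addbF.
Qed.

Lemma B4 m j : odd 'C(m.*2.+1, j.*2.+1) = odd 'C(m, j).
Proof. by rewrite binS oddD (negbTE (B12 m j).2) (B12 m j).1. Qed.

Lemma middle t : 0 < t -> ~~ odd 'C(t.*2, t).
Proof.
case: t => [|u] // _.
rewrite doubleS binS -{1}(bin_sub (n := u.*2.+1) (m := u.+1)); last by lia.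
have -> : u.*2.+1 - u.+1 = u by lia.
by rewrite addnn odd_double.
Qed.

Definition L m := count (fun j => (j.*2 < m) && odd 'C(m, j)) (iota 0 m).

Lemma L_even a : L a.*2 = L a.
Proof.
rewrite /L count_double.
have -> : count (fun t => (t.*2.+1.*2 < a.*2) && odd 'C(a.*2, t.*2.+1)) (iota 0 a) = 0.
  by rewrite (eq_count (a2 := pred0)) ?count_pred0 // => t; rewrite /= (negbTE (B12 a t).2) andbF.
rewrite addn0; apply: eq_count => t /=.
by rewrite ltn_double (B12 a t).1.
Qed.

Lemma L_odd a : 0 < a -> L a.*2.+1 = (L a).*2.
Proof.
move=> a0; rewrite /L -(@count_ext _ a.*2.+1 a.+1.*2); first last.
- move=> i hi; apply/negP => /andP[h _]; lia.
- lia.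
rewrite count_double -[X in _ = X]addnn; congr (_ + _).
  rewrite (eq_count (a2 := fun t => (t.*2 < a) && odd 'C(a, t))); last first.
    move=> t /=; rewrite B3; case: (ltngtP t.*2 a) => h.
    - by congr (_ && _); apply/idP; lia.
    - by case: (odd 'C(a,t)); rewrite ?andbF ?andbT //; apply/negbTE/negP => ?; lia.
    - rewrite (negbTE (_ : ~~ odd 'C(a,t))) ?andbF //; rewrite -{1}h; apply: middle; lia.
  rewrite (@count_ext _ a a.+1) // => i hi; apply/negP => /andP[? _]; lia.
rewrite (eq_count (a2 := fun t => (t.*2 < a) && odd 'C(a, t))); last first.
  move=> t /=; rewrite B4; congr andb; apply/idP/idP => h; lia.
rewrite (@count_ext _ a a.+1) // => i hi; apply/negP => /andP[? _]; lia.
Qed.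

Lemma s2_ext n N : n <= N -> s2 n = \sum_(i < N) odd (n %/ 2 ^ i).
Proof.
move=> le; rewrite /s2 (big_ord_widen N (fun i => (odd (n %/ 2 ^ i) : nat)) le) big_mkcond /=.
apply: eq_bigr => i _; case: ifP => // /negbT; rewrite -leqNgt => Hi.
rewrite divn_small //; apply: (leq_trans (ltn_expl n (ltnSn 1))).
by rewrite leq_exp2l.
Qed.

Lemma s2_rec n : s2 n = odd n + s2 (n %/ 2).
Proof.
rewrite (@s2_ext _ n.+1) // big_ord_recl /= expn0 divn1.
rewrite (@s2_ext _ n); last by rewrite leq_div.
congr (_ + _); apply: eq_bigr => i _.
by rewrite /bump /= add1n expnS divnMA.
Qed.

Lemma s2_gt0 a : 0 < a -> 0 < s2 a.
Proof.
elim/ltn_ind: a => a IH a0; rewrite s2_rec.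
case o: (odd a) => //=; apply: IH.
- rewrite ltn_divLR //; lia.
- move: (odd_double_half a); rewrite o /= add0n -divn2 => e; lia.
Qed.

Lemma L_pow m : 0 < m -> L m = 2 ^ (s2 m - 1).
Proof.
elim/ltn_ind: m => m IH m0.
have e := odd_double_half m; rewrite -divn2 in e.
rewrite s2_rec; set a := m %/ 2 in e *.
case o: (odd m) e => /= e.
  rewrite add1n subn1 /= -e add1n.
  case: (posnP a) => a0.
    by rewrite a0 /L /= /s2 big_ord0.
  rewrite L_odd // IH; [| lia | lia].
  rewrite -muln2 -expnSr; congr (_ ^ _); have := @s2_gt0 a a0; lia.
rewrite add0n in e; rewrite -e L_even add0n IH //; lia.
Qed.

Lemma count_even m : 0 < m ->
  count (fun i => ~~ odd i && (i.*2 < m.*2) && odd 'C(m.*2, i)) (iota 0 m.*2)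
  = 2 ^ (s2 m.*2 - 1).
Proof.
move=> m0; rewrite count_double.
have -> : count (fun t => ~~ odd t.*2.+1 && (t.*2.+1.*2 < m.*2) && odd 'C(m.*2, t.*2.+1)) (iota 0 m) = 0.
  by rewrite (eq_count (a2 := pred0)) ?count_pred0 // => t; rewrite /= odd_double.
rewrite addn0 s2_rec odd_double add0n (_ : m.*2 %/ 2 = m) ?(L_pow m0) ; last by rewrite -muln2 mulnK.
rewrite -L_pow //.
apply: eq_count => t; rewrite odd_double ltn_double (B12 m t).1 //.
Qed.

Local Open Scope ring_scope.

Lemma natr_odd (k : fieldType) : (2%N \in [pchar k]) -> forall c : nat, (c%:R : k) = (odd c)%:R.
Proof.
move=> H c; rewrite -{1}(odd_double_half c) natrD -muln2 natrM (pcharf0 H) mulr0 addr0 //.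
Qed.

Lemma bform_diag (k : fieldType) m (d : 'rV[k]_m) x y :
  bform (diag_mx d) x y = \sum_i x 0 i * d 0 i * y 0 i.
Proof.
rewrite /bform mul_mx_diag !mxE; apply: eq_bigr => i _; rewrite !mxE //.
Qed.

Lemma bform_1 (k : fieldType) r (u v : 'rV[k]_r) :
  bform 1%:M u v = \sum_j u 0 j * v 0 j.
Proof.
rewrite /bform mulmx1 mxE; apply: eq_bigr => i _; rewrite !mxE //.
Qed.

Lemma nondeg01 (k : fieldType) m (d : 'rV[k]_m) :
  (forall i, d 0 i = 0 \/ d 0 i = 1) ->
  nondeg_part_isometric (diag_mx d) (1%:M : 'M[k]_#|[set i | d 0 i != 0]|).
Proof.
move=> H01; set J := [set i | d 0 i != 0].
pose f : 'M[k]_(m, #|J|) := \matrix_(i, j) ((i == enum_val j)%:R).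
have xf : forall (x : 'rV_m) j, (x *m f) 0 j = x 0 (enum_val j).
  move=> x j; rewrite mxE (bigD1 (enum_val j)) //= mxE eqxx mulr1 big1 ?addr0 //.
  by move=> i /negbTE hi; rewrite mxE hi mulr0.
have iso : forall x y, bform (diag_mx d) x y = bform 1%:M (x *m f) (y *m f).
  move=> x y; rewrite bform_diag bform_1.
  rewrite (eq_bigr (fun j => x 0 (enum_val j) * y 0 (enum_val j))); last by move=> j _; rewrite !xf.
  rewrite -(big_enum_val (fun i => x 0 i * y 0 i)) [RHS]big_mkcond /=; apply: eq_bigr => i _.
  rewrite inE; case: (H01 i) => ->; rewrite ?eqxx ?oner_neq0 /= ?mulr0 ?mul0r ?mulr1 //.
have ff : f^T *m f = 1%:M.
  apply/matrixP => j j'; rewrite !mxE (bigD1 (enum_val j)) //= !mxE eqxx mul1r big1 ?addr0.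
    by rewrite (inj_eq enum_val_inj).
  by move=> i /negbTE hi; rewrite !mxE hi mul0r.
exists f; split.
- by apply/row_fullP; exists f^T; exact: ff.
- move=> x; split.
  + by move=> x0 y; rewrite iso /bform x0 !mul0mx mxE.
  + move=> rad; apply/rowP => j; rewrite [RHS]mxE.
    have := rad (delta_mx 0 j *m f^T).
    rewrite iso -mulmxA ff mulmx1 bform_1 (bigD1 j) //= big1 ?addr0.
      by rewrite !mxE !eqxx mulr1.
    by move=> i /negbTE hi; rewrite !mxE hi andbF mulr0.
- exact: iso.
Qed.

Lemma card_count (k : fieldType) (s : seq k) :
  #|[set i : 'I_(size s) | (\row_(i < size s) s`_i) 0 i != 0]| = count (fun x => x != 0) s.
Proof.
rewrite -sum1_card big_mkcond /=.
rewrite (eq_bigr (fun i : 'I_(size s) => if s`_i != 0 then 1%N else 0%N)); last first.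
  by move=> i _; rewrite inE mxE.
rewrite -(big_mkord (fun _ => true) (fun i => if s`_i != 0 then 1%N else 0%N)).
rewrite -big_mkcond /= sum1_count.
have := count_map (nth 0 s) (fun x => x != 0) (iota 0 (size s)).
rewrite map_nth_iota0 // take_size => ->; rewrite /index_iota subn0; exact: eq_count.
Qed.

Theorem theoremB (k : fieldType) (n : nat) :
  (2%N \in [pchar k]) -> (0 < n)%N -> ~~ odd n ->
  phi_odd k n = 0 /\
  nondeg_part_isometric (phi_even k n) (1%:M : 'M[k]_(2 ^ (s2 n - 1))).
Proof.
move=> H2 n0 ev.
have e := odd_double_half n; rewrite (negbTE ev) add0n in e.
set m := n./2 in e; have m0 : (0 < m)%N by rewrite -e double_gt0 in n0.
split.
- apply/matrixP => i j; rewrite /phi_odd /diag_form !mxE.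
  suff -> : (phi_odd_entries k n)`_i = 0 by rewrite mul0rn.
  have h : (i < size [seq x <- iota 0 n | odd x && (x.*2 < n)%N])%N.
    by rewrite -(size_map (fun i => ('C(n, i))%:R : k)); exact: ltn_ord i.
  rewrite /phi_odd_entries (nth_map 0%N) //.
  have := mem_nth 0%N h; rewrite mem_filter => /andP[/andP[ot _] _].
  set t := nth _ _ _ in ot *.
  have et := odd_double_half t; rewrite ot in et.
  rewrite natr_odd // -e -et add1n (negbTE (B12 m _).2) //.
- rewrite /phi_even /diag_form.
  have card : #|[set i : 'I_(size (phi_even_entries k n)) |
       (\row_(i < size (phi_even_entries k n)) (phi_even_entries k n)`_i) 0 i != 0]|
       = (2 ^ (s2 n - 1))%N.
    rewrite card_count /phi_even_entries count_map count_filter -e -count_even //.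
    apply: eq_count => i /=; rewrite natr_odd //.
    by case: (odd 'C(m.*2, i)); rewrite ?oner_neq0 ?eqxx ?andbT ?andbF ?andTb ?andFb.
  rewrite -card; apply: nondeg01 => i; rewrite mxE.
  have h : (i < size [seq x <- iota 0 n | ~~ odd x && (x.*2 < n)%N])%N.
    by rewrite -(size_map (fun i => ('C(n, i))%:R : k)); exact: ltn_ord i.
  rewrite /phi_even_entries (nth_map 0%N) //.
  by rewrite natr_odd //; case: odd; [right | left].
Qed.
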